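(* Let $\Gamma$ be a connected $(Y,Y')$-bipartite distance-regularized graph. Let $D$ denote the (common) eccentricity of the vertices of $Y$, and let $c'_2=c_2(w)$ for $w\in Y'$. The following are equivalent: (i) $\Gamma$ is $2$-$Y$-homogeneous with $D=4$ and $c'_2=1$; (ii) $\Gamma$ is isomorphic to the subdivision graph of a complete bipartite graph $K_{n,n}=(X,\mathcal{R})$ with $n\ge 2$, via an isomorphism mapping $Y$ onto $X$.
   Context: Graphs are finite, simple, undirected. For vertices $u,w$ of a connected graph, $\partial(u,w)$ is the distance, $\Gamma_i(u)$ the set of vertices at distance $i$ from $u$, $\Gamma(u)=\Gamma_1(u)$, $\varepsilon(u)$ the eccentricity of $u$. For $w\in\Gamma_i(u)$ put $a_i(u,w)=|\Gamma_i(u)\cap\Gamma(w)|$, $b_i(u,w)=|\Gamma_{i+1}(u)\cap\Gamma(w)|$, $c_i(u,w)=|\Gamma_{i-1}(u)\cap\Gamma(w)|$. A vertex $u$ is distance-regularized if for each $0\le i\le\varepsilon(u)$ these numbers do not depend on $w\in\Gamma_i(u)$ (they are then written $c_i(u)$ etc.); a connected graph is distance-regularized if all vertices are. $(Y,Y')$-bipartite means the vertex set is the disjoint union of $Y,Y'$ with every edge joining $Y$ to $Y'$; in a bipartite distance-regularized graph all vertices of $Y$ have the same eccentricity and intersection numbers, and likewise for $Y'$. For a $(Y,Y')$-bipartite graph in which every vertex of $Y$ has eccentricity $D\ge3$: it is $2$-$Y$-homogeneous if for each $i$ with $1\le i\le D-1$ the number $|\Gamma(x)\cap\Gamma(y)\cap\Gamma_{i-1}(z)|$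 is the same for all $x\in Y$, $y\in\Gamma_2(x)$, $z\in\Gamma_i(x)\cap\Gamma_i(y)$. The subdivision graph of a graph is obtained by replacing each edge $uv$ by a path $u,w_{uv},v$ through a new vertex $w_{uv}$. *)

(* Defs.v *)
From mathcomp Require Import all_boot.
Set Implicit Arguments. Unset Strict Implicit. Unset Printing Implicit Defensive.

Section Graphs.
Variable T : finType.
Variable e : rel T.

Definition simple_graph : Prop := symmetric e /\ irreflexive e.

Fixpoint walk (k : nat) (u w : T) : bool :=
  match k with
  | 0 => u == w
  | k'.+1 => [exists v, e u v && walk k' v w]
  end.

Definition connected_graph : Prop := forall u w : T, exists k, walk k u w.

(* distance = least length of a walk (a shortest walk has length < #|T|);
   meaningful for connected graphs *)
Definition dist (u w : T) : nat := find (fun k => walk k u w) (iota 0 #|T|).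

Definition sphere (u : T) (i : nat) : {set T} := [set w | dist u w == i].
Definition nbhd (u : T) : {set T} := [set w | e u w].

Definition ecc (u : T) : nat := \max_(w : T) dist u w.

Definition a_num (u w : T) : nat := #|sphere u (dist u w) :&: nbhd w|.
Definition b_num (u w : T) : nat := #|sphere u (dist u w).+1 :&: nbhd w|.
Definition c_num (u w : T) : nat :=
  if dist u w == 0 then 0 else #|sphere u (dist u w).-1 :&: nbhd w|.

Definition dist_regularized_vertex (u : T) : Prop :=
  forall i, i <= ecc u -> forall w w', w \in sphere u i -> w' \in sphere u i ->
    [/\ a_num u w = a_num u w', b_num u w = b_num u w' & c_num u w = c_num u w'].

Definition dist_regularized : Prop :=
  connected_graph /\ forall u, dist_regularized_vertex u.

(* (Y, Y')-bipartite with Y' = complement of Y *)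
Definition bipartite_on (Y : {set T}) : Prop :=
  forall u v, e u v -> (u \in Y) != (v \in Y).

Definition two_Y_homogeneous (Y : {set T}) (D : nat) : Prop :=
  forall i, 1 <= i <= D - 1 -> exists k, forall x y z,
    x \in Y -> y \in sphere x 2 -> z \in sphere x i -> z \in sphere y i ->
    #|nbhd x :&: nbhd y :&: sphere z i.-1| = k.

End Graphs.

(* Subdivision graph of a graph (V, r): vertices are V plus the edges
   (2-subsets {u,v} with r u v); a vertex v is joined to an edge s iff v \in s. *)
Definition edge_of (V : finType) (r : rel V) (s : {set V}) : bool :=
  [exists u, exists v, r u v && (s == [set u; v])].

Definition subdiv_vertex (V : finType) (r : rel V) : finType :=
  (V + {s : {set V} | edge_of r s})%type.

Definition subdiv_rel (V : finType) (r : rel V) : rel (subdiv_vertex r) :=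
  fun a b => match a, b with
             | inl v, inr s => v \in val s
             | inr s, inl v => v \in val s
             | _, _ => false
             end.

Definition Knn (n : nat) : rel ('I_n + 'I_n)%type :=
  fun a b => match a, b with
             | inl _, inr _ | inr _, inl _ => true
             | _, _ => false
             end.
Arguments Knn n : clear implicits.
Arguments subdiv_rel {V} r.
Arguments subdiv_vertex {V} r.

(* Main.v *)
Require Import Defs.
From mathcomp Require Import all_boot.
Set Implicit Arguments. Unset Strict Implicit. Unset Printing Implicit Defensive.

Lemma mkedge_proof n (i j : 'I_n) : edge_of (Knn n) [set inl i; inr j].
Proof. apply/existsP; exists (inl i); apply/existsP; exists (inr j); by rewrite /= eqxx. Qed.

Definition mkedge n (i j : 'I_n) : {s : {set 'I_n + 'I_n} | edge_of (Knn n) s} :=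
  exist (fun s => edge_of (Knn n) s) _ (mkedge_proof i j).

Lemma edge_shape n (s : {s : {set 'I_n + 'I_n} | edge_of (Knn n) s}) :
  exists i j, val s = [set inl i; inr j].
Proof.
case: s => S /= /existsP [u /existsP [v /andP [huv /eqP ->]]].
case: u v huv => [i|i] [j|j] //= _; first by exists i, j.
by exists j, i; rewrite setUC.
Qed.

Lemma in_pair_ord n (i j : 'I_n) (p : 'I_n + 'I_n) :
  (p \in [set inl i; inr j]) = (p == inl i) || (p == inr j).
Proof. by rewrite !inE. Qed.

Section Gen.
Variables (T : finType) (e : rel T).
Hypothesis esym : symmetric e.
Hypothesis eirr : irreflexive e.
Hypothesis conn : connected_graph e.

Lemma walk_path k u w :
  walk e k u w <-> exists p, [/\ size p = k, path e u p & last u p = w].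
Proof.
elim: k u => [|k IH] u /=.
  split; first by move=> /eqP->; exists [::].
  by case=> -[|x p] [] //= _ _ ->.
split.
  case/existsP=> v /andP[euv /IH [p [sp pp lp]]].
  by exists (v :: p); rewrite /= euv sp pp lp.
case=> -[|v p] [] //= [sp] /andP[euv pp] lp.
by apply/existsP; exists v; rewrite euv /=; apply/IH; exists p.
Qed.

Lemma walk_cat m n u v w : walk e m u v -> walk e n v w -> walk e (m + n) u w.
Proof.
elim: m u => [|m IH] u /=; first by move=> /eqP->.
case/existsP=> x /andP[eux hx] hw; apply/existsP; exists x.
by rewrite eux IH.
Qed.

Lemma walk_split m n u w : walk e (m + n) u w -> exists v, walk e m u v /\ walk e n v w.
Proof.
elim: m u => [|m IH] u /=; first by move=> h; exists u; rewrite eqxx.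
case/existsP=> x /andP[eux /IH [v [h1 h2]]]; exists v; split=> //.
by apply/existsP; exists x; rewrite eux.
Qed.

Lemma walk1 u w : walk e 1 u w = e u w.
Proof.
apply/existsP/idP => [[v /andP[h /eqP <-]] //|h]; by exists w; rewrite h eqxx.
Qed.

Lemma walk_sym k u w : walk e k u w -> walk e k w u.
Proof.
elim: k u w => [|k IH] u w /=; first by rewrite eq_sym.
case/existsP=> v /andP[euv hv].
have := walk_cat (IH _ _ hv) (_ : walk e 1 v u); rewrite addn1; apply.
by rewrite walk1 esym.
Qed.

Lemma walk_short k u w : walk e k u w -> exists j, j < #|T| /\ walk e j u w.
Proof.
case/walk_path=> p [_ pp <-].
case: (shortenP pp) => p' pp' up' _.
exists (size p'); split; last by apply/walk_path; exists p'.
have := max_card (mem (u :: p')).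
by rewrite (card_uniqP up').
Qed.

Definition diota := iota 0 #|T|.

Lemma dist_walk u w : walk e (dist e u w) u w.
Proof.
have [k hk] := conn u w.
have [j [jl hj]] := walk_short hk.
have hs : has (fun k => walk e k u w) diota.
  by apply/hasP; exists j => //; rewrite mem_iota.
have hf : dist e u w < #|T|.
  by rewrite /dist -{2}(size_iota 0 #|T|) -has_find.
have := nth_find 0 hs; rewrite /diota nth_iota //.
Qed.

Lemma dist_leT u w : dist e u w <= #|T|.
Proof. by rewrite /dist -{2}(size_iota 0 #|T|) find_size. Qed.

Lemma dist_min u w j : j < dist e u w -> ~~ walk e j u w.
Proof.
move=> hj; have := before_find 0 hj.
have jl : j < #|T| by apply: leq_trans hj (dist_leT _ _).
by rewrite nth_iota // => ->.
Qed.

Lemma dist_le k u w : walk e k u w -> dist e u w <= k.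
Proof.
move=> h; rewrite leqNgt; apply/negP => /dist_min; by rewrite h.
Qed.

Lemma distP k u w : walk e k u w -> (forall j, j < k -> ~~ walk e j u w) -> dist e u w = k.
Proof.
move=> h hm; apply/eqP; rewrite eqn_leq dist_le //=.
rewrite leqNgt; apply/negP => /hm; by rewrite dist_walk.
Qed.

Lemma dist0 u w : (dist e u w == 0) = (u == w).
Proof.
apply/eqP/eqP => [h|->].
  by have := dist_walk u w; rewrite h /= => /eqP.
by apply: distP => //= j.
Qed.

Lemma dist_refl u : dist e u u = 0.
Proof. by apply/eqP; rewrite dist0. Qed.

Lemma dist1 u w : (dist e u w == 1) = e u w.
Proof.
apply/eqP/idP => [h|h].
  by have := dist_walk u w; rewrite h walk1.
apply: distP; first by rewrite walk1.
case=> //= _; apply/negP=> /eqP ee; by rewrite ee eirr in h.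
Qed.

Lemma dist_sym u w : dist e u w = dist e w u.
Proof.
by apply/eqP; rewrite eqn_leq !dist_le // walk_sym // dist_walk.
Qed.

Lemma dist_tri u v w : dist e u w <= dist e u v + dist e v w.
Proof. by apply: dist_le; apply: walk_cat; apply: dist_walk. Qed.

Lemma dist_step k u w : dist e u w = k.+1 -> exists v, e u v /\ dist e v w = k.
Proof.
move=> h; have := dist_walk u w; rewrite h /= => /existsP[v /andP[euv hv]].
exists v; split=> //; apply/eqP; rewrite eqn_leq dist_le //=.
have := dist_tri u v w; rewrite h.
have -> : dist e u v = 1 by apply/eqP; rewrite dist1.
by [].
Qed.

Lemma dist_nbr u v w : e u v -> dist e u w <= (dist e v w).+1.
Proof.
move=> h; have := dist_tri u v w.
have -> : dist e u v = 1 by apply/eqP; rewrite dist1.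
by [].
Qed.

Lemma dist_le_ecc u w : dist e u w <= ecc e u.
Proof. rewrite /ecc; exact: (@leq_bigmax T (fun w => dist e u w) w). Qed.

Lemma ecc_attained u : exists w, dist e u w = ecc e u.
Proof.
have h : 0 < #|T| by apply/card_gt0P; exists u.
have [w hw] := eq_bigmax (fun w => dist e u w) h.
by exists w; rewrite /ecc hw.
Qed.

Lemma in_sphere u i w : (w \in sphere e u i) = (dist e u w == i).
Proof. by rewrite inE. Qed.

Lemma in_nbhd u w : (w \in nbhd e u) = e u w.
Proof. by rewrite inE. Qed.

Variable Y : {set T}.
Hypothesis bip : bipartite_on e Y.

Lemma walk_par k u w : walk e k u w -> ((u \in Y) == (w \in Y)) = ~~ odd k.
Proof.
elim: k u => [|k IH] u /=; first by move=> /eqP->; rewrite eqxx.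
case/existsP=> v /andP[euv /IH <-].
have := bip euv.
by case: (u \in Y); case: (v \in Y); case: (w \in Y).
Qed.

Lemma dist_par u w : ((u \in Y) == (w \in Y)) = ~~ odd (dist e u w).
Proof. exact: walk_par (dist_walk u w). Qed.


Lemma walk_cons k u v w : e u v -> walk e k v w -> walk e k.+1 u w.
Proof. by move=> h1 h2; apply/existsP; exists v; rewrite h1. Qed.

Lemma walk0 u : walk e 0 u u.
Proof. by rewrite /= eqxx. Qed.

Lemma walk2P u w : walk e 2 u w -> exists p, e u p /\ e p w.
Proof.
case/existsP=> p /andP[h1 /existsP[q /andP[h2 /eqP <-]]]; by exists p.
Qed.

Lemma dist2P u w : dist e u w = 2 -> exists p, e u p /\ e p w.
Proof. move=> h; apply: walk2P; rewrite -h; exact: dist_walk. Qed.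

Lemma in_Y_par u w : u \in Y -> ~~ odd (dist e u w) -> w \in Y.
Proof. by move=> hu; rewrite -dist_par hu => /eqP <-. Qed.

Lemma notin_Y_par u w : u \notin Y -> ~~ odd (dist e u w) -> w \notin Y.
Proof. by move=> /negbTE hu; rewrite -dist_par hu eq_sym => /eqP ->. Qed.

Lemma adj_Y u v : e u v -> u \in Y -> v \notin Y.
Proof. by move=> /bip; case: (u \in Y); case: (v \in Y). Qed.

Lemma adj_nY u v : e u v -> u \notin Y -> v \in Y.
Proof. by move=> /bip; case: (u \in Y); case: (v \in Y). Qed.

Lemma dist_walkle k u w : walk e k u w -> dist e u w <= k.
Proof. exact: dist_le. Qed.

Lemma dist_two u p w : u != w -> e u p -> e p w -> (u \in Y) = (w \in Y) -> dist e u w = 2.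
Proof.
move=> nuw h1 h2 hY.
have hle : dist e u w <= 2.
  apply: dist_le; apply: (walk_cons h1); apply: (walk_cons h2); exact: walk0.
have hev : ~~ odd (dist e u w) by rewrite -dist_par hY eqxx.
have h0 : dist e u w != 0 by rewrite dist0.
by move: hle hev h0; case: (dist e u w) => [|[|[|d]]].
Qed.

Lemma dist_three u w : ~~ e u w -> walk e 3 u w -> (u \in Y) != (w \in Y) -> dist e u w = 3.
Proof.
move=> nuw h hY.
have hle : dist e u w <= 3 by apply: dist_le.
have hod : odd (dist e u w) by rewrite -[odd _]negbK -dist_par; case: (u \in Y) hY; case: (w \in Y).
have h1 : dist e u w != 1 by rewrite dist1.
by move: hle hod h1; case: (dist e u w) => [|[|[|[|d]]]].
Qed.

Lemma even4 d : d <= 4 -> ~~ odd d -> d != 0 -> d != 2 -> d = 4.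
Proof. by case: d => [|[|[|[|[|d]]]]]. Qed.

Lemma odd3 d : d <= 4 -> odd d -> d != 1 -> d = 3.
Proof. by case: d => [|[|[|[|[|d]]]]]. Qed.

Lemma walk3 u v w x : e u v -> e v w -> e w x -> walk e 3 u x.
Proof. move=> h1 h2 h3; apply: (walk_cons h1); apply: (walk_cons h2); apply: (walk_cons h3); exact: walk0. Qed.

Lemma walk4 u v w x y : e u v -> e v w -> e w x -> e x y -> walk e 4 u y.
Proof. move=> h1 h2 h3 h4; apply: (walk_cons h1); apply: (walk_cons h2); apply: (walk_cons h3); apply: (walk_cons h4); exact: walk0. Qed.

Record Struct (A B : {set T}) : Prop := {
  SY : forall x, (x \in Y) = (x \in A) || (x \in B);
  SD : forall x, ~~ ((x \in A) && (x \in B));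
  SL : forall l, l \notin Y -> exists a b, [/\ a \in A, b \in B & nbhd e l = [set a; b]];
  SE : forall a b, a \in A -> b \in B -> exists l, e a l && e b l;
  SU : forall a b l l', a \in A -> b \in B -> e a l -> e b l -> e a l' -> e b l' -> l = l';
  S2A : exists a a', [/\ a \in A, a' \in A & a != a'];
  S2B : exists b b', [/\ b \in B, b' \in B & b != b'] }.

Lemma Struct_sym A B : Struct A B -> Struct B A.
Proof.
case=> hY hD hL hE hU h2A h2B; split => //.
- by move=> x; rewrite orbC.
- by move=> x; rewrite andbC.
- move=> l /hL [a [b [ha hb hn]]]; exists b, a; split => //; by rewrite setUC.
- by move=> a b ha hb; have [l hl] := hE b a hb ha; exists l; rewrite andbC.
- by move=> a b l l' ha hb h1 h2 h3 h4; apply: (hU b a).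
Qed.

Section S.
Variables A B : {set T}.
Hypothesis S : Struct A B.

Lemma AY a : a \in A -> a \in Y.
Proof. by move=> h; rewrite (SY S) h. Qed.
Lemma BY a : a \in B -> a \in Y.
Proof. by move=> h; rewrite (SY S) h orbT. Qed.
Lemma AnB a : a \in A -> a \notin B.
Proof. by move=> h; have := SD S a; rewrite h. Qed.
Lemma BnA a : a \in B -> a \notin A.
Proof. by move=> h; have := SD S a; rewrite h andbT. Qed.

Lemma split_line u v l : u \in Y -> u != v -> e u l -> e v l ->
  (u \in A) && (v \in B) || (u \in B) && (v \in A).
Proof.
move=> hu nuv hul hvl.
have hl : l \notin Y by apply: adj_Y hul hu.
have [a [b [ha hb hn]]] := SL S hl.
move: nuv.
have : u \in nbhd e l by rewrite in_nbhd esym.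
have : v \in nbhd e l by rewrite in_nbhd esym.
rewrite hn !inE => /orP[] /eqP -> /orP[] /eqP ->; rewrite ?eqxx // ?ha ?hb //= ?orbT //.
Qed.

Lemma ecc_A x : x \in A -> ecc e x = 4.
Proof.
move=> hx; apply/eqP; rewrite eqn_leq; apply/andP; split.
  apply/bigmax_leqP => v _.
  case hv : (v \in Y).
    move: hv; rewrite (SY S) => /orP[] hv.
      case: (eqVneq x v) => [<-|nxv]; first by rewrite dist_refl.
      have [b [_ [hb _ _]]] := S2B S.
      have [l1 /andP[h1 h2]] := SE S hx hb.
      have [l2 /andP[h3 h4]] := SE S hv hb.
      apply: dist_walkle; apply: (walk_cons h1); apply: (walk_cons (_ : e l1 b)); first by rewrite esym.
      apply: (walk_cons h4); apply: (walk_cons (_ : e l2 v)); first by rewrite esym.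
      exact: walk0.
    have [l1 /andP[h1 h2]] := SE S hx hv.
    apply: leq_trans (_ : 2 <= 4) => //; apply: dist_walkle.
    apply: (walk_cons h1); apply: (walk_cons (_ : e l1 v)); first by rewrite esym.
    exact: walk0.
  have [a [b [ha hb hn]]] := SL S (negbT hv).
  have [l1 /andP[h1 h2]] := SE S hx hb.
  apply: leq_trans (_ : 3 <= 4) => //; apply: dist_walkle.
  apply: (walk_cons h1); apply: (walk_cons (_ : e l1 b)); first by rewrite esym.
  apply: (walk_cons (_ : e b v)); last exact: walk0.
  by rewrite esym -in_nbhd hn !inE eqxx orbT.
have [a [a' [ha ha' naa]]] := S2A S.
have [x' [hx' nxx]] : exists x', x' \in A /\ x != x'.
  case: (eqVneq x a) => [exa|nxa]; last by exists a.
  by exists a'; rewrite exa.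
apply: leq_trans (dist_le_ecc x x').
have hev : ~~ odd (dist e x x') by rewrite -dist_par (AY hx) (AY hx').
have hle : dist e x x' <= 4.
  have [b [_ [hb _ _]]] := S2B S.
  have [l1 /andP[h1 h2]] := SE S hx hb.
  have [l2 /andP[h3 h4]] := SE S hx' hb.
  apply: dist_walkle; apply: (walk_cons h1); apply: (walk_cons (_ : e l1 b)); first by rewrite esym.
  apply: (walk_cons h4); apply: (walk_cons (_ : e l2 x')); first by rewrite esym.
  exact: walk0.
have h0 : dist e x x' != 0 by rewrite dist0.
have h2 : dist e x x' != 2.
  apply/eqP => /dist2P [p [h1 h2]].
  have := split_line (AY hx) nxx h1 (_ : e x' p); rewrite esym => /(_ h2).
  by rewrite (negbTE (AnB hx)) (negbTE (AnB hx')) andbF.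
move: hev hle h0 h2; case: (dist e x x') => [|[|[|[|[|d]]]]] //.
Qed.

Lemma three_in_pair (a b x y p : T) : x \in [set a; b] -> y \in [set a; b] ->
  p \in [set a; b] -> x != y -> (p == x) || (p == y).
Proof.
rewrite !inE => /orP[] /eqP -> /orP[] /eqP -> /orP[] /eqP ->; rewrite ?eqxx ?orbT //.
Qed.

Lemma cnum_S w z : w \notin Y -> z \in sphere e w 2 -> c_num e w z = 1.
Proof.
move=> hw; rewrite in_sphere => /eqP hz.
rewrite /c_num hz /=.
have [p [h1 h2]] := dist2P hz.
have -> : sphere e w 1 :&: nbhd e z = [set p].
  apply/setP => v; rewrite !inE dist1.
  case: (eqVneq v p) => [->|nvp]; first by rewrite h1 esym h2.
  apply/negP => /andP[h3 h4].
  have hp : p \in Y := adj_nY h1 hw.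
  have hpw : e p w by rewrite esym.
  have hvw : e v w by rewrite esym.
  have hvz : e v z by rewrite esym.
  have := split_line hp (_ : p != v) hpw hvw; rewrite eq_sym => /(_ nvp).
  case/orP => /andP[ha hb].
    have ewz := SU S ha hb hpw hvw h2 hvz.
    by move: hz; rewrite ewz dist_refl.
  have ewz := SU S hb ha hvw hpw hvz h2.
  by move: hz; rewrite ewz dist_refl.
by rewrite cards1.
Qed.

Lemma twoY_S : two_Y_homogeneous e Y 4.
Proof.
move=> i /andP[hi1 hi2].
have : i = 1 \/ i = 2 \/ i = 3 by move: hi1 hi2; case: i => [|[|[|[|i]]]]; auto.
case=> [->|[->|->]].
- exists 1 => x y z hx; rewrite !in_sphere => /eqP hy /eqP hxz /eqP hyz.
  have -> : nbhd e x :&: nbhd e y :&: sphere e z 0 = [set z].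
    apply/setP => v; rewrite !inE dist0.
    case: (eqVneq v z) => [->|nvz]; last by rewrite andbF.
    by rewrite andbT -!dist1 hxz hyz.
  by rewrite cards1.
- exists 0 => x y z hx; rewrite !in_sphere => /eqP hy /eqP hxz /eqP hyz; exfalso.
  have hyY : y \in Y by apply: in_Y_par hx _; rewrite hy.
  have hzY : z \in Y by apply: in_Y_par hx _; rewrite hxz.
  have nxy : x != y by apply/eqP => exy; move: hy; rewrite exy dist_refl.
  have nxz : x != z by apply/eqP => exy; move: hxz; rewrite exy dist_refl.
  have nyz : y != z by apply/eqP => exy; move: hyz; rewrite exy dist_refl.
  have [p1 [h1 h2]] := dist2P hy.
  have [p2 [h3 h4]] := dist2P hxz.
  have [p3 [h5 h6]] := dist2P hyz.
  have := split_line hx nxy h1 (_ : e y p1); rewrite esym => /(_ h2).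
  have := split_line hx nxz h3 (_ : e z p2); rewrite esym => /(_ h4).
  have := split_line hyY nyz h5 (_ : e z p3); rewrite esym => /(_ h6).
  move: (SD S x) (SD S y) (SD S z).
  by case: (x \in A); case: (x \in B); case: (y \in A); case: (y \in B);
     case: (z \in A); case: (z \in B).
- exists 0 => x y z hx; rewrite !in_sphere => /eqP hy /eqP hxz /eqP hyz.
  apply/eqP; rewrite cards_eq0; apply/eqP/setP => l; rewrite !inE.
  apply/negP => /andP[/andP[h1 h2] /eqP hzl].
  have [p [h3 h4]] := dist2P hzl.
  have nxy : x != y by apply/eqP => exy; move: hy; rewrite exy dist_refl.
  have hl : l \notin Y := adj_Y h1 hx.
  have [a [b [_ _ hn]]] := SL S hl.
  have := three_in_pair (x:=x) (y:=y) (p:=p) (a:=a) (b:=b).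
  rewrite -hn !in_nbhd !(esym l) h1 h2 h4 => /(_ isT isT isT nxy).
  case/orP => /eqP ep; subst p.
    by move: hxz; rewrite (_ : dist e x z = 1) //; apply/eqP; rewrite dist1 esym.
  by move: hyz; rewrite (_ : dist e y z = 1) //; apply/eqP; rewrite dist1 esym.
Qed.

Lemma count_far a b l c : a \in A -> b \in B -> e a l -> e b l -> c \in A -> c != a ->
  #|sphere e l 4 :&: nbhd e c| = #|B| - 1.
Proof.
move=> ha hb hal hbl hc nca.
pose phi b' := odflt c [pick m | e c m && e b' m].
have phiP b' : b' \in B -> e c (phi b') /\ e b' (phi b').
  move=> hb'; rewrite /phi; case: pickP => [m /andP[h1 h2] //|none].
  by have [m /andP[h1 h2]] := SE S hc hb'; have := none m; rewrite h1 h2.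
have hl : l \notin Y by apply: adj_Y hal (AY ha).
have [a1 [b1 [ha1 hb1 hnl]]] := SL S hl.
have hnl' : nbhd e l = [set a; b].
  have e1 : a = a1.
    move: hal; rewrite esym -in_nbhd hnl !inE => /orP[] /eqP // ea.
    by move: ha; rewrite ea (negbTE (BnA hb1)).
  have e2 : b = b1.
    move: hbl; rewrite esym -in_nbhd hnl !inE => /orP[] /eqP // eb.
    by move: hb; rewrite eb (negbTE (AnB ha1)).
  by rewrite e1 e2.
have lineC m : e c m -> exists b', b' \in B /\ nbhd e m = [set c; b'].
  move=> hcm; have hm : m \notin Y by apply: adj_Y hcm (AY hc).
  have [a2 [b2 [ha2 hb2 hn2]]] := SL S hm.
  exists b2; split => //.
  move: hcm; rewrite esym -in_nbhd hn2 !inE => /orP[] /eqP ec; first by rewrite -ec.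
  by move: hc; rewrite ec (negbTE (BnA hb2)).
have hcl : c \notin nbhd e l.
  rewrite hnl' !inE negb_or nca /=; apply/eqP => ecb.
  by move: hc; rewrite ecb (negbTE (BnA hb)).
have -> : sphere e l 4 :&: nbhd e c = phi @: (B :\ b).
  apply/setP => m; rewrite !inE; apply/idP/imsetP.
    case/andP => /eqP hd hcm.
    have [b' [hb' hnm]] := lineC m hcm.
    exists b'; first rewrite !inE hb' andbT.
      apply/eqP => eb; rewrite eb in hnm; move: hd.
      have hbm : e b m by rewrite esym -in_nbhd hnm !inE eqxx orbT.
      have nlm : l != m by apply/eqP => elm; move: hcl; rewrite elm in_nbhd esym hcm.
      rewrite (dist_two nlm (_ : e l b) hbm) //; first by rewrite esym.
      by rewrite (negbTE hl) (negbTE (adj_Y hcm (AY hc))).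
    have [h1 h2] := phiP b' hb'.
    have [b'' [hb'' hn'']] := lineC _ h1.
    have hb'm : e b' m by rewrite esym -in_nbhd hnm !inE eqxx orbT.
    apply: (SU S hc hb' hcm hb'm h1 h2).
  case=> b' /setD1P[nb' hb'] ->.
  have [h1 h2] := phiP b' hb'.
  rewrite h1 andbT.
  have hm : phi b' \notin Y by apply: adj_Y h1 (AY hc).
  have [b2 [hb2 hn2]] := lineC _ h1.
  have eb2 : b' = b2.
    move: h2; rewrite esym -in_nbhd hn2 !inE => /orP[] /eqP // ec.
    by move: hc; rewrite -ec (negbTE (BnA hb')).
  apply/eqP; apply: even4.
  - apply: dist_le; apply: (walk4 (v:=b) (w:=phi b) (x:=c)); rewrite ?(esym l) //.
    + by case: (phiP b hb).
    + by rewrite esym; case: (phiP b hb).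
  - by rewrite -dist_par (negbTE hl) (negbTE hm).
  - rewrite dist0; apply/eqP => elm; move: hcl; by rewrite elm in_nbhd esym h1.
  - apply/eqP => /dist2P [p [hp1 hp2]].
    have : p \in nbhd e l by rewrite in_nbhd.
    have : p \in nbhd e (phi b') by rewrite in_nbhd esym.
    rewrite hnl' hn2 !inE => /orP[] /eqP -> /orP[] /eqP.
    + by move=> eca; move: nca; rewrite eca eqxx.
    + by move=> ecb; move: hc; rewrite ecb (negbTE (BnA hb)).
    + by move=> eba; move: ha; rewrite -eba (negbTE (BnA hb2)).
    + by move=> ebb; move: nb'; rewrite eb2 ebb eqxx.
rewrite card_in_imset.
  by rewrite (cardsD1 b B) hb add1n subn1.
move=> b1' b2' /setD1P[_ hb1'] /setD1P[_ hb2'] heq.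
have [h1 h2] := phiP b1' hb1'.
have [_ h4] := phiP b2' hb2'.
have [b3 [hb3 hn3]] := lineC _ h1.
have : b1' \in nbhd e (phi b1') by rewrite in_nbhd esym.
have : b2' \in nbhd e (phi b1') by rewrite in_nbhd heq esym.
rewrite hn3 !inE => /orP[] /eqP e2.
  by move: hb2'; rewrite e2 (negbTE (AnB hc)).
move=> /orP[] /eqP e1; first by move: hb1'; rewrite e1 (negbTE (AnB hc)).
by rewrite e1 e2.
Qed.

End S.

Lemma struct_i A B : Struct A B ->
  [/\ two_Y_homogeneous e Y 4,
        (forall x, x \in Y -> ecc e x = 4) &
        (forall w z, w \notin Y -> z \in sphere e w 2 -> c_num e w z = 1)].
Proof.
move=> S; split.
- exact: twoY_S S.
- move=> x; rewrite (SY S) => /orP[] hx. exact: (@ecc_A A B S x hx).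
  exact: (@ecc_A B A (Struct_sym S) x hx).
- exact: cnum_S S.
Qed.
Section Iso.
Variable n : nat.
Hypothesis n2 : 2 <= n.
Variable f : T -> subdiv_vertex (Knn n).
Hypothesis fbij : bijective f.
Hypothesis fE : forall u v, e u v = subdiv_rel (Knn n) (f u) (f v).
Hypothesis fY : forall x, (x \in Y) = (if f x is inl _ then true else false).

Definition Af := [set v | if f v is inl (inl _) then true else false].
Definition Bf := [set v | if f v is inl (inr _) then true else false].

Lemma iso_struct : Struct Af Bf.
Proof.
have [g fK gK] := fbij.
have eqg v c : (v == g c) = (f v == c).
  apply/eqP/eqP => [->|<-]; by rewrite ?gK ?fK.
have finj := bij_inj fbij.
have ginj : injective g by apply: can_inj gK.
have hA i : g (inl (inl i)) \in Af by rewrite inE gK.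
have hB i : g (inl (inr i)) \in Bf by rewrite inE gK.
have fA a : a \in Af -> exists i, f a = inl (inl i).
  by rewrite inE; case: (f a) => [[i|i]|] //; exists i.
have fB a : a \in Bf -> exists i, f a = inl (inr i).
  by rewrite inE; case: (f a) => [[i|i]|] //; exists i.
have fL l : l \notin Y -> exists s, f l = inr s.
  by rewrite fY; case: (f l) => [|s] //; exists s.
split.
- by move=> x; rewrite fY !inE; case: (f x) => [[]|].
- by move=> x; rewrite !inE; case: (f x) => [[]|].
- move=> l /fL [s hs]; have [i [j hij]] := edge_shape s.
  exists (g (inl (inl i))), (g (inl (inr j))); split => //.
  apply/setP => v; rewrite !inE !eqg fE hs /=.
  case: (f v) => [p|t] //=; by rewrite hij in_pair_ord.
- move=> a b /fA [i hi] /fB [j hj]; exists (g (inr (mkedge i j))).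
  by rewrite !fE hi hj gK /= !in_pair_ord !eqxx orbT.
- move=> a b l l' /fA [i hi] /fB [j hj] h1 h2 h3 h4.
  have hl : forall l, e a l -> e b l -> f l = inr (mkedge i j).
    move=> m; rewrite !fE hi hj; case: (f m) => [//|t] /= hm1 hm2.
    have [i' [j' hij]] := edge_shape t.
    move: hm1 hm2; rewrite hij !in_pair_ord /= => /orP[] // /eqP [ei] /eqP [ej].
    by rewrite (_ : t = mkedge i j) //; apply: val_inj; rewrite hij ei ej.
  by apply: finj; rewrite !hl.
- have o0 : 0 < n by apply: leq_trans n2.
  exists (g (inl (inl (Ordinal o0)))), (g (inl (inl (Ordinal n2)))); split => //.
  by apply/eqP => /ginj [].
- have o0 : 0 < n by apply: leq_trans n2.
  exists (g (inl (inr (Ordinal o0)))), (g (inl (inr (Ordinal n2)))); split => //.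
  by apply/eqP => /ginj [].
Qed.

End Iso.

Section Build.
Variables A B : {set T}.
Hypothesis S : Struct A B.
Hypothesis hcard : #|A| = #|B|.
Variables a0 b0 : T.
Hypothesis ha0 : a0 \in A.
Hypothesis hb0 : b0 \in B.

Definition ia (v : T) : 'I_#|A| := enum_rank_in ha0 v.
Definition ib (v : T) : 'I_#|A| := cast_ord (sym_eq hcard) (enum_rank_in hb0 v).
Definition endA (l : T) : T := odflt a0 [pick v in A | e l v].
Definition endB (l : T) : T := odflt b0 [pick v in B | e l v].

Definition fb (v : T) : subdiv_vertex (Knn #|A|) :=
  if v \in A then inl (inl (ia v))
  else if v \in B then inl (inr (ib v))
  else inr (mkedge (ia (endA v)) (ib (endB v))).

Lemma ends l : l \notin Y -> exists a b,
  [/\ a \in A, b \in B, nbhd e l = [set a; b], endA l = a & endB l = b].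
Proof.
move=> hl; have [a [b [ha hb hn]]] := SL S hl.
have hla : e l a by rewrite -in_nbhd hn !inE eqxx.
have hlb : e l b by rewrite -in_nbhd hn !inE eqxx orbT.
exists a, b; split => //.
  rewrite /endA; case: pickP => [v /andP[hv hlv]|none] /=; last by have := none a; rewrite ha hla.
  move: hlv; rewrite -in_nbhd hn !inE => /orP[] /eqP // ev.
  by move: hv; rewrite ev (negbTE (BnA S hb)).
rewrite /endB; case: pickP => [v /andP[hv hlv]|none] /=; last by have := none b; rewrite hb hlb.
move: hlv; rewrite -in_nbhd hn !inE => /orP[] /eqP // ev.
by move: hv; rewrite ev (negbTE (AnB S ha)).
Qed.

Lemma ia_inj u v : u \in A -> v \in A -> ia u = ia v -> u = v.
Proof.
move=> hu hv h.
by rewrite -(enum_rankK_in ha0 hu) -(enum_rankK_in ha0 hv); congr enum_val.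
Qed.

Lemma ib_inj u v : u \in B -> v \in B -> ib u = ib v -> u = v.
Proof.
move=> hu hv /cast_ord_inj h.
by rewrite -(enum_rankK_in hb0 hu) -(enum_rankK_in hb0 hv) h.
Qed.

Lemma pair_inj m (i j i' j' : 'I_m) :
  [set inl i; inr j] = [set inl i'; inr j'] -> i = i' /\ j = j'.
Proof.
move=> h.
have h1 : inl i \in [set inl i'; inr j'] by rewrite -h !inE eqxx.
have h2 : inr j \in [set inl i'; inr j'] by rewrite -h !inE eqxx orbT.
move: h1 h2; rewrite !in_pair_ord => /orP[] // /eqP [->] /orP[] // /eqP [->] //.
Qed.

Lemma fb_inl_A v : v \in A -> fb v = inl (inl (ia v)).
Proof. by move=> h; rewrite /fb h. Qed.
Lemma fb_inl_B v : v \in B -> fb v = inl (inr (ib v)).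
Proof. by move=> h; rewrite /fb h (negbTE (BnA S h)). Qed.
Lemma fb_inr v : v \notin Y -> fb v = inr (mkedge (ia (endA v)) (ib (endB v))).
Proof.
by move=> h; move: (h); rewrite (SY S) negb_or => /andP[h1 h2]; rewrite /fb (negbTE h1) (negbTE h2).
Qed.

Lemma Y_cases v : [\/ v \in A, v \in B | v \notin Y].
Proof.
case hv : (v \in Y); last by constructor 3.
by move: hv; rewrite (SY S) => /orP[]; [constructor 1|constructor 2].
Qed.

Lemma fb_inj : injective fb.
Proof.
move=> u v.
case: (Y_cases u) => hu.
  rewrite (fb_inl_A hu); case: (Y_cases v) => hv;
    [rewrite (fb_inl_A hv) | rewrite (fb_inl_B hv) | rewrite (fb_inr hv)] => //.
  by case; apply: ia_inj.
case: (Y_cases v) => hv.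
- by rewrite (fb_inl_A hv) (fb_inl_B hu).
- rewrite (fb_inl_B hv) (fb_inl_B hu); case => /val_inj h.
  by rewrite -(enum_rankK_in hb0 hu) -(enum_rankK_in hb0 hv) h.
- by rewrite (fb_inr hv) (fb_inl_B hu).
case: (Y_cases v) => hv.
- by rewrite (fb_inl_A hv) (fb_inr hu).
- by rewrite (fb_inl_B hv) (fb_inr hu).
rewrite (fb_inr hv) (fb_inr hu).
case => /pair_inj [h1 h2].
have [a [b [ha hb hn ea eb]]] := ends hu.
have [a' [b' [ha' hb' hn' ea' eb']]] := ends hv.
rewrite ea ea' eb eb' in h1 h2.
have e1 := ia_inj ha ha' h1; have e2 := ib_inj hb hb' h2.
rewrite -e1 -e2 in hn'.
have hua : e a u by rewrite esym -in_nbhd hn !inE eqxx.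
have hub : e b u by rewrite esym -in_nbhd hn !inE eqxx orbT.
have hva : e a v by rewrite esym -in_nbhd hn' !inE eqxx.
have hvb : e b v by rewrite esym -in_nbhd hn' !inE eqxx orbT.
have huv := SU S ha hb hua hub hva hvb. exact: huv.
Qed.

Lemma fb_surj c : exists v, fb v = c.
Proof.
case: c => [[i|j]|s].
- exists (enum_val i); rewrite fb_inl_A ?enum_valP //.
  by rewrite /ia enum_valK_in.
- exists (enum_val (cast_ord hcard j)); rewrite fb_inl_B ?enum_valP //.
  by rewrite /ib enum_valK_in cast_ordK.
have [i [j hij]] := edge_shape s.
set a := enum_val i; set b := enum_val (cast_ord hcard j).
have ha : a \in A by apply: enum_valP.
have hb : b \in B by apply: enum_valP.
have [l /andP[hal hbl]] := SE S ha hb.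
have hl : l \notin Y by apply: adj_Y hal (AY S ha).
exists l; rewrite fb_inr //.
have [a' [b' [ha' hb' hn ea eb]]] := ends hl.
have e1 : a = a'.
  move: hal; rewrite esym -in_nbhd hn !inE => /orP[] /eqP // ea'.
  by move: ha; rewrite ea' (negbTE (BnA S hb')).
have e2 : b = b'.
  move: hbl; rewrite esym -in_nbhd hn !inE => /orP[] /eqP // eb'.
  by move: hb; rewrite eb' (negbTE (AnB S ha')).
rewrite ea eb -e1 -e2 /a /b /ia /ib !enum_valK_in cast_ordK.
by congr inr; apply: val_inj; rewrite hij.
Qed.

Lemma fb_bij : bijective fb.
Proof.
apply: inj_card_bij; first exact: fb_inj.
pose g c := odflt a0 [pick v | fb v == c].
have gK : cancel g fb.
  move=> c; rewrite /g; case: pickP => [v /eqP //|none].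
  by have [v hv] := fb_surj c; have := none v; rewrite hv eqxx.
exact: leq_card (can_inj gK).
Qed.

Lemma subdiv_rel_sym m (a b : subdiv_vertex (Knn m)) :
  subdiv_rel (Knn m) a b = subdiv_rel (Knn m) b a.
Proof. by case: a b => [a|a] [b|b]. Qed.

Lemma fb_edge_mixed u v : u \in Y -> v \notin Y -> e u v = subdiv_rel (Knn #|A|) (fb u) (fb v).
Proof.
move=> hu hv.
have [a [b [ha hb hn ea eb]]] := ends hv.
rewrite (fb_inr hv) ea eb esym -in_nbhd hn !inE.
move: hu; rewrite (SY S) => /orP[] hu.
  rewrite (fb_inl_A hu) /= in_pair_ord /= orbF.
  have -> : (u == b) = false by apply/negbTE/eqP => eub; move: hu; rewrite eub (negbTE (BnA S hb)).
  rewrite orbF; apply/eqP/eqP => [->//|]; by move=> [] /ia_inj ->.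
rewrite (fb_inl_B hu) /= in_pair_ord /=.
have -> : (u == a) = false by apply/negbTE/eqP => eub; move: hu; rewrite eub (negbTE (AnB S ha)).
apply/eqP/eqP => [->//|]; move=> [] h.
have h2 : enum_rank_in hb0 u = enum_rank_in hb0 b by apply: val_inj.
by rewrite -(enum_rankK_in hb0 hu) h2 (enum_rankK_in hb0 hb).
Qed.

Lemma fb_edge u v : e u v = subdiv_rel (Knn #|A|) (fb u) (fb v).
Proof.
case hu : (u \in Y); case hv : (v \in Y).
- have -> : e u v = false by apply/negbTE/negP => /bip; rewrite hu hv.
  move: hu hv; rewrite !(SY S) => /orP[] hu /orP[] hv.
  + by rewrite (fb_inl_A hu) (fb_inl_A hv).
  + by rewrite (fb_inl_A hu) (fb_inl_B hv).
  + by rewrite (fb_inl_B hu) (fb_inl_A hv).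
  + by rewrite (fb_inl_B hu) (fb_inl_B hv).
- by apply: fb_edge_mixed; rewrite ?hu ?hv.
- by rewrite esym subdiv_rel_sym; apply: fb_edge_mixed; rewrite ?hu ?hv.
- have -> : e u v = false by apply/negbTE/negP => /bip; rewrite hu hv.
  by rewrite (fb_inr (negbT hu)) (fb_inr (negbT hv)).
Qed.

Lemma fb_Y x : (x \in Y) = (if fb x is inl _ then true else false).
Proof.
case: (Y_cases x) => hx.
- by rewrite fb_inl_A // (AY S hx).
- by rewrite fb_inl_B // (BY S hx).
- by rewrite fb_inr // (negbTE hx).
Qed.

End Build.

Lemma struct_ii A B : Struct A B -> #|A| = #|B| ->
    exists n : nat, 2 <= n /\
      exists f : T -> subdiv_vertex (Knn n),
        [/\ bijective f,
            (forall u v, e u v = subdiv_rel (Knn n) (f u) (f v)) &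
            (forall x, (x \in Y) = (if f x is inl _ then true else false))].
Proof.
move=> S hc.
have [a [a' [ha ha' naa]]] := S2A S.
have [b [b' [hb hb' nbb]]] := S2B S.
exists #|A|; split; first by apply/card_gt1P; exists a, a'.
exists (fb hc ha hb); split.
- exact: fb_bij.
- exact: fb_edge.
- exact: fb_Y.
Qed.

Section Main.
Hypothesis dr : forall u, dist_regularized_vertex e u.
Hypothesis H2Y : two_Y_homogeneous e Y 4.
Hypothesis Hecc : forall x, x \in Y -> ecc e x = 4.
Hypothesis Hc2 : forall w z, w \notin Y -> z \in sphere e w 2 -> c_num e w z = 1.
Variable x0 : T.
Hypothesis hx0 : x0 \in Y.

Lemma dr_b u w w' : dist e u w <= ecc e u -> dist e u w' = dist e u w ->
  b_num e u w = b_num e u w'.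
Proof.
move=> hi hw.
have hs1 : w \in sphere e u (dist e u w) by rewrite in_sphere.
have hs2 : w' \in sphere e u (dist e u w) by rewrite in_sphere hw.
by have [_ h _] := dr hi hs1 hs2.
Qed.

Lemma dr_c u w w' : dist e u w <= ecc e u -> dist e u w' = dist e u w ->
  c_num e u w = c_num e u w'.
Proof.
move=> hi hw.
have hs1 : w \in sphere e u (dist e u w) by rewrite in_sphere.
have hs2 : w' \in sphere e u (dist e u w) by rewrite in_sphere hw.
by have [_ _ h] := dr hi hs1 hs2.
Qed.

Lemma far x : x \in Y -> exists z, dist e x z = 4.
Proof. by move=> hx; have [z hz] := ecc_attained x; exists z; rewrite hz Hecc. Qed.

Lemma F0 w z x y : w \notin Y -> z \notin Y -> w != z -> x != y ->
  e x w -> e y w -> e x z -> e y z -> False.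
Proof.
move=> hw hz nwz nxy h1 h2 h3 h4.
have hd : dist e w z = 2.
  have hwx : e w x by rewrite esym.
  by apply: (dist_two nwz hwx h3); rewrite (negbTE hw) (negbTE hz).
have := Hc2 hw (_ : z \in sphere e w 2); rewrite in_sphere hd => /(_ isT).
rewrite /c_num hd /= => hc.
have : #|[set x; y]| <= #|sphere e w 1 :&: nbhd e z|.
  apply: subset_leq_card; apply/subsetP => v; rewrite !inE => /orP[] /eqP ->;
  by rewrite dist1 esym ?h1 ?h2 /= esym ?h3 ?h4.
by rewrite hc cards2 nxy.
Qed.

Lemma Ldeg2 l : l \notin Y -> exists x y, [/\ x != y, e l x & e l y].
Proof.
move=> hl.
have [v hv] : exists v, e l v.
  have nl : dist e l x0 != 0 by rewrite dist0; apply/eqP => ex; move: hl; rewrite ex hx0.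
  move: nl; case hd : (dist e l x0) => [//|k] _.
  by have [v [hv _]] := dist_step hd; exists v.
have hvY : v \in Y := adj_nY hv hl.
have [z hz] := far hvY.
have [w0 [h1 h2]] := dist_step hz.
have [u [h3 h4]] := dist_step h2.
have nvu : v != u by apply/eqP => evu; move: hz; rewrite evu h4.
have hw0 : w0 \notin Y := adj_Y h1 hvY.
have huY : u \in Y := adj_nY h3 hw0.
have hvu : dist e v u = 2 by apply: (dist_two nvu h1 h3); rewrite hvY huY.
have hd1 : dist e v w0 = 1 by apply/eqP; rewrite dist1.
have hdl : dist e v l = 1 by apply/eqP; rewrite dist1 esym.
have : 0 < b_num e v w0.
  apply/card_gt0P; exists u; rewrite !inE hd1 hvu /=; by [].
rewrite (dr_b (w' := l) _ _); first last.
- by rewrite hdl hd1.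
- by rewrite hd1 Hecc.
move/card_gt0P => [y]; rewrite !inE hdl => /andP[/eqP hy hly].
exists v, y; split => //.
by apply/eqP => evy; move: hy; rewrite evy dist_refl.
Qed.

Lemma Pdeg2 x L : x \in Y -> e x L -> exists M, M != L /\ e x M.
Proof.
move=> hx hxL.
have hL : L \notin Y := adj_Y hxL hx.
have [z hz] := far hx.
have [v1 [h1 h2]] := dist_step hz.
case: (eqVneq v1 L) => [ev1|nv1]; last by exists v1.
subst v1.
have [v2 [h3 h4]] := dist_step h2.
have [v3 [h5 h6]] := dist_step h4.
have hv2 : v2 \in Y := adj_nY h3 hL.
have hv3 : v3 \notin Y := adj_Y h5 hv2.
have nL3 : L != v3 by apply/eqP => e3; move: h2; rewrite e3 h6.
have hd : dist e L v3 = 2 by apply: (dist_two nL3 h3 h5); rewrite (negbTE hL) (negbTE hv3).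
have hd1 : dist e L v2 = 1 by apply/eqP; rewrite dist1.
have hdx : dist e L x = 1 by apply/eqP; rewrite dist1 esym.
have : 0 < b_num e L v2.
  apply/card_gt0P; exists v3; rewrite !inE hd1 hd /=; by [].
rewrite (dr_b (w' := x) _ _); first last.
- by rewrite hdx hd1.
- by rewrite hd1 -hdx dist_le_ecc.
move/card_gt0P => [M]; rewrite !inE hdx => /andP[/eqP hM hxM].
exists M; split => //.
by apply/eqP => eM; move: hM; rewrite eM dist_refl.
Qed.

Lemma F1 L x y p : L \notin Y -> x != y -> x != p -> y != p ->
  e L x -> e L y -> e L p -> False.
Proof.
move=> hL nxy nxp nyp hLx hLy hLp.
have hx : x \in Y := adj_nY hLx hL.
have hy : y \in Y := adj_nY hLy hL.
have hp : p \in Y := adj_nY hLp hL.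
have hxL : e x L by rewrite esym.
have hyL : e y L by rewrite esym.
have hpL : e p L by rewrite esym.
have [k2 hk2] := @H2Y 2 isT.
have [k3 hk3] := @H2Y 3 isT.
have k2pos : 0 < k2.
  have := hk2 x y p hx; rewrite !in_sphere.
  rewrite (dist_two nxy hxL hLy) ?hx ?hy // (dist_two nxp hxL hLp) ?hx ?hp //.
  rewrite (dist_two nyp hyL hLp) ?hy ?hp // => /(_ isT isT isT) <-.
  by apply/card_gt0P; exists L; rewrite !inE hxL hyL /= dist1 hpL.
have [M [nML hxM]] := Pdeg2 hx hxL.
have hM : M \notin Y := adj_Y hxM hx.
have [q [hMq nqx]] : exists q, e M q /\ q != x.
  have [u [v [nuv h1 h2]]] := Ldeg2 hM.
  case: (eqVneq u x) => [eux|nux]; last by exists u.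
  by exists v; split => //; rewrite -eux eq_sym.
have hq : q \in Y := adj_nY hMq hM.
have hqM : e q M by rewrite esym.
have [N [nNM hqN]] := Pdeg2 hq hqM.
have hN : N \notin Y := adj_Y hqN hq.
have nxN : ~~ e x N.
  apply/negP => hxN; apply: (F0 hM hN (_ : M != N) (_ : x != q) hxM hqM hxN hqN).
    by rewrite eq_sym.
  by rewrite eq_sym.
have nqL : ~~ e q L.
  apply/negP => hqL; apply: (F0 hL hM (_ : L != M) (_ : x != q) hxL hqL hxM hqM).
    by rewrite eq_sym.
  by rewrite eq_sym.
have nqx' : x != q by rewrite eq_sym.
have hNq : e N q by rewrite esym.
case: (boolP [exists r, e N r && e L r]) => [/existsP [r /andP[hNr hLr]]|none].
  have hr : r \in Y := adj_nY hLr hL.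
  have nxr : x != r by apply/eqP => exr; move: nxN; rewrite exr esym hNr.
  have nrq : r != q by apply/eqP => erq; move: nqL; rewrite -erq esym hLr.
  have hrL : e r L by rewrite esym.
  have hrN : e r N by rewrite esym.
  have := hk2 x r q hx; rewrite !in_sphere.
  rewrite (dist_two nxr hxL hLr) ?hx ?hr // (dist_two nqx' hxM hMq) ?hx ?hq //.
  rewrite (dist_two nrq hrN hNq) ?hr ?hq // => /(_ isT isT isT) h0.
  move: k2pos; rewrite -h0 => /card_gt0P [W]; rewrite !inE dist1 => /andP[/andP[hxW hrW] hqW].
  case: (eqVneq W L) => [eWL|nWL].
    by move: nqL; rewrite -eWL hqW.
  have hW : W \notin Y := adj_Y hxW hx.
  by apply: (F0 hL hW (_ : L != W) nxr hxL hrL hxW hrW); rewrite eq_sym.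
have [z [nzL hpz]] := Pdeg2 hp hpL.
have hz : z \notin Y := adj_Y hpz hp.
have nxz : ~~ e x z.
  apply/negP => hxz; apply: (F0 hL hz (_ : L != z) nxp hxL hpL hxz hpz).
  by rewrite eq_sym.
have nyz : ~~ e y z.
  apply/negP => hyz; apply: (F0 hL hz (_ : L != z) nyp hyL hpL hyz hpz).
  by rewrite eq_sym.
have hk3pos : 0 < k3.
  have := hk3 x y z hx; rewrite !in_sphere.
  rewrite (dist_two nxy hxL hLy) ?hx ?hy //.
  rewrite (dist_three nxz (walk3 hxL hLp hpz)) ?hx ?hz //.
  rewrite (dist_three nyz (walk3 hyL hLp hpz)) ?hy ?hz // => /(_ isT isT isT) <-.
  apply/card_gt0P; exists L; rewrite !inE hxL hyL /=.
  have nzL' : z != L by [].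
  have hzp : e z p by rewrite esym.
  by rewrite (dist_two nzL' hzp hpL) // (negbTE hz) (negbTE hL).
have nyN : ~~ e y N.
  apply/negP => hyN; move/existsP: none; apply; exists y; by rewrite esym hyN hLy.
have := hk3 x y N hx; rewrite !in_sphere.
rewrite (dist_two nxy hxL hLy) ?hx ?hy //.
rewrite (dist_three nxN (walk3 hxM hMq hqN)) ?hx ?hN //.
have -> : dist e y N = 3.
  apply: odd3; first by rewrite -(Hecc hy) dist_le_ecc.
    by rewrite -[odd _]negbK -dist_par hy (negbTE hN).
  by rewrite dist1.
move=> /(_ isT isT isT) h0.
move: hk3pos; rewrite -h0 => /card_gt0P [W]; rewrite !inE => /andP[/andP[hxW hyW] /eqP hNW].
have [r [hNr hrW]] := dist2P hNW.
case: (eqVneq W L) => [eWL|nWL].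
  move/existsP: none; apply; exists r; by rewrite hNr -eWL esym.
have hW : W \notin Y := adj_Y hxW hx.
by apply: (F0 hL hW (_ : L != W) nxy hxL hyL hxW hyW); rewrite eq_sym.
Qed.

Lemma Line2 l : l \notin Y -> exists a b, a != b /\ nbhd e l = [set a; b].
Proof.
move=> hl; have [a [b [nab ha hb]]] := Ldeg2 hl.
exists a, b; split => //; apply/setP => v; rewrite in_nbhd !inE.
apply/idP/idP => [hv|/orP[] /eqP -> //].
case: (eqVneq v a) => [//|nva]; case: (eqVneq v b) => [_|nvb]; first by rewrite orbT.
by exfalso; apply: (F1 hl nab (_ : a != v) (_ : b != v) ha hb hv); rewrite eq_sym.
Qed.

Lemma C1 x y z : x \in Y -> dist e x y = 2 -> dist e x z = 2 -> dist e y z = 2 -> False.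
Proof.
move=> hx hxy hxz hyz.
have hy : y \in Y by apply: in_Y_par hx _; rewrite hxy.
have hz : z \in Y by apply: in_Y_par hx _; rewrite hxz.
have nxy : x != y by apply/eqP => exy; move: hxy; rewrite exy dist_refl.
have nxz : x != z by apply/eqP => exy; move: hxz; rewrite exy dist_refl.
have nyz : y != z by apply/eqP => exy; move: hyz; rewrite exy dist_refl.
have [l1 [h1 h2]] := dist2P hxy.
have [l [h3 h4]] := dist2P hyz.
have hl : l \notin Y := adj_Y h3 hy.
have nxl : ~~ e x l.
  apply/negP => hxl; have hlx : e l x by rewrite esym.
  have hly : e l y by rewrite esym.
  exact: (F1 hl nxy nxz nyz hlx hly h4).
have hd : dist e x l = 3.
  by apply: (dist_three nxl (walk3 h1 h2 h3)); rewrite hx (negbTE hl).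
have c2 : 2 <= c_num e x l.
  rewrite /c_num hd /=.
  apply: (@leq_trans #|[set y; z]|); first by rewrite cards2 nyz.
  apply: subset_leq_card; apply/subsetP => v; rewrite !inE => /orP[] /eqP ->.
    by rewrite hxy eqxx /= esym.
  by rewrite hxz eqxx /=.
have [z' hz'] := far hx.
have [l' [h5 h6]] := dist_step (etrans (dist_sym z' x) hz').
have hd' : dist e x l' = 3 by rewrite dist_sym.
have hz'Y : z' \in Y by apply: in_Y_par hx _; rewrite hz'.
have hl' : l' \notin Y := adj_Y h5 hz'Y.
have c1 : c_num e x l' <= 1.
  rewrite /c_num hd' /=.
  have [a [b [nab hn]]] := Line2 hl'.
  apply: (@leq_trans #|nbhd e l' :\ z'|).
    apply: subset_leq_card; apply/subsetP => v; rewrite !inE => /andP[/eqP hv ->].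
    by rewrite andbT; apply/eqP => evz; move: hv; rewrite evz hz'.
  have := cardsD1 z' (nbhd e l'); rewrite hn cards2 nab !inE.
  have : z' \in nbhd e l' by rewrite in_nbhd esym.
  by rewrite hn !inE => ->; rewrite add1n => -[<-].
have hc := @dr_c x l l' (dist_le_ecc x l) (etrans hd' (sym_eq hd)).
by move: c2; rewrite hc => /leq_trans /(_ c1).
Qed.

Lemma C2 x a b : x \in Y -> dist e x a = 4 -> dist e x b = 4 -> dist e a b = 2 -> False.
Proof.
move=> hx ha hb hab.
have haY : a \in Y by apply: in_Y_par hx _; rewrite ha.
have nab : a != b by apply/eqP => eab; move: hab; rewrite eab dist_refl.
have [l [h1 h2]] := dist2P hab.
have hl : l \notin Y := adj_Y h1 haY.
have [c [d [ncd hn]]] := Line2 hl.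
have nb v : e l v -> (v == a) || (v == b).
  move=> hv; apply: (three_in_pair (a:=c) (b:=d) _ _ _ nab); rewrite -hn in_nbhd // esym //.
have nlx : dist e l x != 0 by rewrite dist0; apply/eqP => elx; move: hl; rewrite elx hx.
move: nlx; case hk : (dist e l x) => [//|k] _.
have [v [hv hvx]] := dist_step hk.
have hk4 : k = 4.
  by case/orP: (nb v hv) => /eqP ev; rewrite -hvx ev dist_sym.
have := dist_le_ecc x l; rewrite dist_sym hk hk4 Hecc //.
Qed.

Definition Am := [set v in Y | dist e x0 v != 2].
Definition Bm := [set v in Y | dist e x0 v == 2].

Lemma dA a : a \in Am -> a = x0 \/ dist e x0 a = 4.
Proof.
rewrite !inE => /andP[ha h2].
have hev : ~~ odd (dist e x0 a) by rewrite -dist_par hx0 ha.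
have hle : dist e x0 a <= 4 by rewrite -(Hecc hx0) dist_le_ecc.
case: (eqVneq (dist e x0 a) 0) => [/eqP|h0]; first by rewrite dist0 => /eqP ->; left.
by right; apply: even4.
Qed.

Lemma AA a a' : a \in Am -> a' \in Am -> dist e a a' = 2 -> False.
Proof.
move=> ha ha' h.
case: (dA ha) => [ea|h1].
  by move: ha'; rewrite !inE -ea h eqxx andbF.
case: (dA ha') => [ea|h2].
  by move: ha; rewrite !inE -ea dist_sym h eqxx andbF.
exact: C2 hx0 h1 h2 h.
Qed.

Lemma BB b b' : b \in Bm -> b' \in Bm -> dist e b b' = 2 -> False.
Proof.
rewrite !inE => /andP[_ /eqP h1] /andP[_ /eqP h2] h.
exact: C1 hx0 h1 h2 h.
Qed.

Lemma AB a b : a \in Am -> b \in Bm -> dist e a b = 2.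
Proof.
move=> ha hb.
have haY : a \in Y by move: ha; rewrite inE => /andP[].
have hbY : b \in Y by move: hb; rewrite inE => /andP[].
have nab : a != b.
  by apply/eqP => eab; move: ha hb; rewrite eab !inE => /andP[_ /negbTE h1] /andP[_]; rewrite h1.
case: (dA ha) => [ea|h4].
  by move: hb; rewrite ea inE => /andP[_ /eqP].
have hev : ~~ odd (dist e a b) by rewrite -dist_par haY hbY.
have hle : dist e a b <= 4 by rewrite -(Hecc haY) dist_le_ecc.
case: (eqVneq (dist e a b) 2) => [//|n2].
have h4' : dist e a b = 4 by apply: even4 => //; rewrite dist0.
exfalso.
have [v1 [h1 h2]] := dist_step h4'.
have [c [h3 h4'']] := dist_step h2.
have hv1 : v1 \notin Y := adj_Y h1 haY.
have hc : c \in Y := adj_nY h3 hv1.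
have nac : a != c by apply/eqP => eac; move: h4'; rewrite eac h4''.
have hac : dist e a c = 2 by apply: (dist_two nac h1 h3); rewrite haY hc.
case hcB : (dist e x0 c == 2).
  by apply: (BB (_ : c \in Bm) hb h4''); rewrite inE hc hcB.
by apply: (AA ha (_ : c \in Am) hac); rewrite inE hc hcB.
Qed.

Lemma struct_main : Struct Am Bm.
Proof.
split.
- by move=> x; rewrite !inE; case: (x \in Y); case: (dist e x0 x == 2).
- by move=> x; rewrite !inE; case: (x \in Y); case: (dist e x0 x == 2).
- move=> l hl; have [a [b [nab hn]]] := Line2 hl.
  have hla : e l a by rewrite -in_nbhd hn !inE eqxx.
  have hlb : e l b by rewrite -in_nbhd hn !inE eqxx orbT.
  have ha : a \in Y := adj_nY hla hl.
  have hb : b \in Y := adj_nY hlb hl.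
  have hab : dist e a b = 2.
    by apply: (dist_two nab (_ : e a l) hlb); rewrite ?ha ?hb // esym.
  case haA : (dist e x0 a == 2).
    have haB : a \in Bm by rewrite inE ha haA.
    have hbA : b \in Am.
      rewrite inE hb /=; apply/negP => hb2.
      by apply: (BB haB (_ : b \in Bm) hab); rewrite inE hb hb2.
    by exists b, a; split => //; rewrite setUC.
  have haA' : a \in Am by rewrite inE ha haA.
  have hbB : b \in Bm.
    rewrite inE hb /=; apply/negPn/negP => hb2.
    by apply: (AA haA' (_ : b \in Am) hab); rewrite inE hb hb2.
  by exists a, b.
- move=> a b ha hb; have [p [h1 h2]] := dist2P (AB ha hb).
  by exists p; rewrite h1 esym h2.
- move=> a b l l' ha hb h1 h2 h3 h4.
  have haY : a \in Y by move: ha; rewrite inE => /andP[].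
  have nab : a != b.
    by apply/eqP => eab; move: ha hb; rewrite eab !inE => /andP[_ /negbTE hq1] /andP[_]; rewrite hq1.
  case: (eqVneq l l') => [//|nll].
  exfalso; exact: (F0 (adj_Y h1 haY) (adj_Y h3 haY) nll nab h1 h2 h3 h4).
- have [z hz] := far hx0.
  have hzY : z \in Y by apply: in_Y_par hx0 _; rewrite hz.
  exists x0, z; split.
  + by rewrite inE hx0 dist_refl.
  + by rewrite inE hzY hz.
  + by apply/eqP => ez; move: hz; rewrite -ez dist_refl.
- have [z hz] := far hx0.
  have [v1 [h1 h2]] := dist_step hz.
  have [c [h3 h4]] := dist_step h2.
  have hv1 : v1 \notin Y := adj_Y h1 hx0.
  have hc : c \in Y := adj_nY h3 hv1.
  have nxc : x0 != c by apply/eqP => exc; move: hz; rewrite exc h4.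
  have hxc : dist e x0 c = 2 by apply: (dist_two nxc h1 h3); rewrite hx0 hc.
  have hcB : c \in Bm by rewrite inE hc hxc.
  have [c' hc'] := far hc.
  have hc'Y : c' \in Y by apply: in_Y_par hc _; rewrite hc'.
  have hc'B : c' \in Bm.
    rewrite inE hc'Y /=; apply/negPn/negP => hn.
    have hA : c' \in Am by rewrite inE hc'Y hn.
    by move: (AB hA hcB); rewrite dist_sym hc'.
  exists c, c'; split => //.
  by apply/eqP => ec; move: hc'; rewrite -ec dist_refl.
Qed.

Lemma card_main : #|Am| = #|Bm|.
Proof.
have S := struct_main.
have [a [a' [ha ha' naa]]] := S2A S.
have [b [b' [hb hb' nbb]]] := S2B S.
have [l /andP[hal hbl]] := SE S ha hb.
have hl : l \notin Y := adj_Y hal (AY S ha).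
have [p [q [npq hn]]] := Line2 hl.
have nbl v : e l v -> (v == a) || (v == b).
  move=> hv; apply: (three_in_pair (a:=p) (b:=q) _ _ _ (_ : a != b)).
  - by rewrite -hn in_nbhd esym.
  - by rewrite -hn in_nbhd esym.
  - by rewrite -hn in_nbhd.
  - by apply/eqP => eab; move: ha; rewrite eab (negbTE (BnA S hb)).
have [m /andP[ha'm hbm]] := SE S ha' hb.
have [m' /andP[ham' hb'm']] := SE S ha hb'.
have hd1 : dist e l a' = 3.
  apply: dist_three.
  - apply/negP => /nbl /orP[] /eqP ea.
      by move: naa; rewrite ea eqxx.
    by move: ha'; rewrite ea (negbTE (BnA S hb)).
  - by apply: (walk3 (_ : e l b) hbm); rewrite esym.
  - by rewrite (negbTE hl) (AY S ha').
have hd2 : dist e l b' = 3.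
  apply: dist_three.
  - apply/negP => /nbl /orP[] /eqP ea.
      by move: hb'; rewrite ea (negbTE (AnB S ha)).
    by move: nbb; rewrite ea eqxx.
  - by apply: (walk3 (_ : e l a) ham'); rewrite esym.
  - by rewrite (negbTE hl) (BY S hb').
have := dr_b (w := a') (w' := b') (dist_le_ecc l a'); rewrite hd1 hd2 => /(_ erefl).
rewrite /b_num hd1 hd2.
rewrite (count_far S ha hb hal hbl ha' (_ : a' != a)); last by rewrite eq_sym.
rewrite (count_far (Struct_sym S) hb ha hbl hal hb' (_ : b' != b)); last by rewrite eq_sym.
have hA : 1 <= #|Am| by apply/card_gt0P; exists a.
have hB : 1 <= #|Bm| by apply/card_gt0P; exists b.
by move=> h; rewrite -(subnK hA) -(subnK hB) h.
Qed.

End Main.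

End Gen.

Unset Implicit Arguments.
Set Strict Implicit.

Theorem theorem5p5 (T : finType) (e : rel T) (Y : {set T}) :
  simple_graph e -> dist_regularized e -> bipartite_on e Y -> Y != set0 ->
  ( [/\ two_Y_homogeneous e Y 4,
        (forall x, x \in Y -> ecc e x = 4) &
        (forall w z, w \notin Y -> z \in sphere e w 2 -> c_num e w z = 1)]
    <->
    exists n : nat, 2 <= n /\
      exists f : T -> subdiv_vertex (Knn n),
        [/\ bijective f,
            (forall u v, e u v = subdiv_rel (Knn n) (f u) (f v)) &
            (forall x, (x \in Y) = (if f x is inl _ then true else false))] ).
Proof.
move=> [hsym hirr] [hconn hdr] hbip /set0Pn [x0 hx0].
split.
  case=> H2Y Hecc Hc2.
  exact: (struct_ii hsym hbip (struct_main hsym hirr hconn hbip hdr H2Y Hecc Hc2 hx0)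
                              (card_main hsym hirr hconn hbip hdr H2Y Hecc Hc2 hx0)).
case=> n [n2 [f [fbij fE fY]]].
exact: (struct_i hsym hirr hconn hbip (iso_struct n2 fbij fE fY)).
Qed.
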